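(* Let $v$ be any Borel measurable function from $[0,T]\times\mathbb{R}^d$ to $\mathbb{R}$ such that $$\int_0^T \mathbb{E}\Big[\Big|\inf_{\kappa\in U} H\big(t,X_t,\kappa,\partial_x v(t,X_t),\partial_{xx}^2 v(t,X_t)\big)\Big|\Big]\,\mathrm{d}t<\infty.$$ Assume the optimal feedback control exists under $v$, i.e. there is $u\in\mathcal{U}_{\mathrm{ad}}$ with $$H_t^{u,v}=\inf_{\kappa\in U} H\big(t,X_t,\kappa,\partial_x v(t,X_t),\partial_{xx}^2 v(t,X_t)\big)\quad (\ast)$$ for $(t,\omega)\in[0,T]\times\Omega$, a.e.-$\mathrm{d}t\times\mathbb{P}$. Then a control $u$ satisfying $(\ast)$ can be found from the minimization problem: find $u\in\mathcal{U}_{\mathrm{ad}}$ such that $$\int_0^T\mathbb{E}[H_t^{u,v}]\,\mathrm{d}t=\inf_{\bar u\in\mathcal{U}_{\mathrm{ad}}}\int_0^T\mathbb{E}[H_t^{\bar u,v}]\,\mathrm{d}t;$$ i.e. this minimization problem has a solution, and any solution satisfies $(\ast)$ a.e.-$\mathrm{d}t\times\mathbb{P}$.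
   Context: Let $(\Omega,\mathcal{F},\mathbb{F}^B,\mathbb{P})$ be a filtered complete probability space with $\mathbb{F}^B=(\mathcal{F}_t)_{0\le t\le T}$ the natural filtration of a standard $q$-dimensional Brownian motion $B$, and $T\in(0,\infty)$. Let $U\subset\mathbb{R}^m$ and let $\mathcal{U}_{\mathrm{ad}}$ be the set of Borel measurable functions $u:[0,T]\times\mathbb{R}^d\to U$. Let $H:[0,T]\times\mathbb{R}^d\times U\times\mathbb{R}^d\times\mathbb{R}^{d\times d}\to\mathbb{R}$, $(t,x,\kappa,z,p)\mapsto H(t,x,\kappa,z,p)$, be the Hamiltonian of the HJB-type equation $\partial_t v+\mathcal{L}v+\inf_{\kappa\in U}H(t,x,\kappa,\partial_x v,\partial_{xx}^2 v)=0$, where $\mathcal{L}=\mu^\top(t,x)\partial_x+\frac12\operatorname{Tr}[\sigma\sigma^\top(t,x)\partial_{xx}^2]$ for given $\mu:[0,T]\times\mathbb{R}^d\to\mathbb{R}^d$, $\sigma:[0,T]\times\mathbb{R}^d\to\mathbb{R}^{d\times q}$. Let $X$ be the uncontrolled diffusion $X_t=X_0+\int_0^t\mu(s,X_s)\,\mathrm{d}s+\int_0^t\sigma(s,X_s)\,\mathrm{d}B_s$, $t\in[0,T]$. For $u\in\mathcal{U}_{\mathrm{ad}}$ and $v$, the Hamiltonian process is $H_t^{u,v}:=H\big(t,X_t,u(t,X_t),\partial_x v(t,X_t),\partial_{xx}^2 v(t,X_t)\big)$ (with $\partial_x$ the gradient and $\partial_{xx}^2$ the Hessian in $x$). *)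

(* Defs.v *)
From HB Require Import structures.
From mathcomp Require Import all_boot all_order all_algebra.
From mathcomp Require Import all_classical all_reals all_analysis.
Set Implicit Arguments. Unset Strict Implicit. Unset Printing Implicit Defensive.
Import Order.TTheory GRing.Theory Num.Theory.
Import numFieldNormedType.Exports.
Local Open Scope classical_set_scope.
Local Open Scope ring_scope.

Definition Rvec (R : realType) (n : nat) := g_sigma_algebraType (@open 'rV[R]_n).
Definition Rmat (R : realType) (n : nat) := g_sigma_algebraType (@open 'M[R]_n).

Definition ebasis (R : realType) (n : nat) (i : 'I_n) : 'rV[R]_n := delta_mx 0 i.

Definition gradx (R : realType) (d : nat) (v : R -> 'rV[R]_d -> R)
  (t : R) (x : 'rV[R]_d) : 'rV[R]_d :=
  \row_i ('D_(@ebasis R d i) (v t) x).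

Definition hessx (R : realType) (d : nat) (v : R -> 'rV[R]_d -> R)
  (t : R) (x : 'rV[R]_d) : 'M[R]_d :=
  \matrix_(i, j) ('D_(@ebasis R d j) ('D_(@ebasis R d i) (v t)) x).

Definition Uad (R : realType) (d m : nat) (T : R) (U : set 'rV[R]_m)
  : set (R -> 'rV[R]_d -> 'rV[R]_m) :=
  [set u | @measurable_fun _ _ (R * Rvec R d)%type (Rvec R m)
             (`[0, T] `*` setT) (fun z => u z.1 z.2)
         /\ forall t x, 0 <= t <= T -> U (u t x)].

Definition Hproc (R : realType) (d m : nat) (Omega : Type)
  (H : R -> 'rV[R]_d -> 'rV[R]_m -> 'rV[R]_d -> 'M[R]_d -> R)
  (X : R -> Omega -> 'rV[R]_d) (v : R -> 'rV[R]_d -> R)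
  (u : R -> 'rV[R]_d -> 'rV[R]_m) (t : R) (w : Omega) : R :=
  H t (X t w) (u t (X t w)) (gradx v t (X t w)) (hessx v t (X t w)).

Definition Hinf (R : realType) (d m : nat) (Omega : Type) (U : set 'rV[R]_m)
  (H : R -> 'rV[R]_d -> 'rV[R]_m -> 'rV[R]_d -> 'M[R]_d -> R)
  (X : R -> Omega -> 'rV[R]_d) (v : R -> 'rV[R]_d -> R)
  (t : R) (w : Omega) : \bar R :=
  ereal_inf [set (H t (X t w) k (gradx v t (X t w)) (hessx v t (X t w)))%:E
            | k in U].

Definition Jcost (R : realType) (d m : nat) (dO : measure_display)
  (Omega : measurableType dO) (P : probability Omega R)
  (T : R)
  (H : R -> 'rV[R]_d -> 'rV[R]_m -> 'rV[R]_d -> 'M[R]_d -> R)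
  (X : R -> Omega -> 'rV[R]_d) (v : R -> 'rV[R]_d -> R)
  (u : R -> 'rV[R]_d -> 'rV[R]_m) : \bar R :=
  (\int[lebesgue_measure]_(t in `[0%R, T]%classic) \int[P]_w (Hproc H X v u t w)%:E)%E.

(* Main.v *)
Require Import Defs.
From HB Require Import structures.
From mathcomp Require Import all_boot all_order all_algebra.
From mathcomp Require Import all_classical all_reals all_analysis.
From mathcomp Require Import measurable_realfun.
Import Order.TTheory GRing.Theory Num.Theory.
Import numFieldNormedType.Exports.
Local Open Scope classical_set_scope.
Local Open Scope ring_scope.

Section gen1.
Local Open Scope ereal_scope.
Context d (T : measurableType d) (R : realType) (mu : {measure set T -> \bar R}).

Lemma pos_le (F G : T -> \bar R) x : F x <= G x -> F^\+ x <= G^\+ x.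
Proof.
move=> h; apply: (@funepos_le _ _ [set x] F G); last exact/mem_set.
by move=> y /set_mem ->.
Qed.

Lemma neg_le (F G : T -> \bar R) x : F x <= G x -> G^\- x <= F^\- x.
Proof.
move=> h; apply: (@funeneg_le _ _ [set x] F G); last exact/mem_set.
by move=> y /set_mem ->.
Qed.

Lemma nm_le_integral D (f g : T -> \bar R) : (forall x, D x -> 0 <= f x) ->
  (forall x, D x -> f x <= g x) ->
  \int[mu]_(x in D) f x <= \int[mu]_(x in D) g x.
Proof.
move=> f0 fg.
have g0 x : D x -> 0 <= g x by move=> Dx; exact: le_trans (f0 _ Dx) (fg _ Dx).
rewrite (ge0_integralE mu f0) (ge0_integralE mu g0) /=.
apply: ereal_sup_le => _ [h hf <-]; exists h => //= x.
apply: le_trans (hf x) _; rewrite /patch; case: ifPn => // /set_mem; exact: fg.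
Qed.

Lemma ae_nm_le_integral D (mD : measurable D) (f g : T -> \bar R) :
  measurable_fun D f -> (forall x, D x -> 0 <= f x) ->
  (forall x, D x -> 0 <= g x) ->
  {ae mu, forall x, D x -> f x <= g x} ->
  \int[mu]_(x in D) f x <= \int[mu]_(x in D) g x.
Proof.
move=> mf f0 g0 [N [mN N0 sN]].
rewrite (ge0_negligible_integral mN mD mf f0 N0).
rewrite (integral_mkcond (D `\` N)) [X in _ <= X](integral_mkcond D).
apply: nm_le_integral => x _; rewrite /patch.
  by case: ifPn => // /set_mem [Dx _]; exact: f0.
case: ifPn => [/set_mem [Dx Nx]|_].
  rewrite ifT; last exact/mem_set.
  apply: contrapT => h; apply: Nx; apply: sN => /= H; apply: h; exact: H.
by case: ifPn => // /set_mem; exact: g0.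
Qed.

Lemma ae_le_integral D (mD : measurable D) (F G : T -> \bar R) :
  measurable_fun D F -> measurable_fun D G ->
  {ae mu, forall x, D x -> F x <= G x} ->
  \int[mu]_(x in D) F x <= \int[mu]_(x in D) G x.
Proof.
move=> mF mG FG; rewrite (integralE _ _ F) (integralE _ _ G); apply: leeB.
- apply: ae_nm_le_integral => //; first exact: measurable_funepos.
  by move: FG; apply: filterS => x h Dx; apply: pos_le; exact: h.
- apply: ae_nm_le_integral => //; first exact: measurable_funeneg.
  by move: FG; apply: filterS => x h Dx; apply: neg_le; exact: h.
Qed.


Lemma ae_eq_of_le D (mD : measurable D) (F G : T -> \bar R) :
  measurable_fun D F -> measurable_fun D G -> mu.-integrable D F ->
  {ae mu, forall x, D x -> F x <= G x} ->
  \int[mu]_(x in D) G x <= \int[mu]_(x in D) F x ->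
  {ae mu, forall x, D x -> F x = G x}.
Proof.
move=> mF mG iF FG GF.
have Gn : \int[mu]_(x in D) G^\- x <= \int[mu]_(x in D) F^\- x.
  apply: ae_nm_le_integral => //; first exact: measurable_funeneg.
  by move: FG; apply: filterS => x h Dx; apply: neg_le; exact: h.
have Fn := integral_funeneg_lt_pinfty mD iF.
have Gnf : \int[mu]_(x in D) G^\- x \is a fin_num.
  rewrite ge0_fin_numE; last exact: integral_ge0.
  exact: le_lt_trans Gn Fn.
have Ffin := integrable_fin_num mD iF.
have iG : mu.-integrable D G.
  apply/integrableP; split => //.
  rewrite (_ : (fun x => `|G x|) = (G^\+ \+ G^\-)); last first.
    by apply/funext => x; rewrite -[LHS]/((abse \o G) x) fune_abse.
  rewrite ge0_integralD //; try exact: measurable_funepos;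
    try exact: measurable_funeneg.
  apply: lte_add_pinfty; last exact: le_lt_trans Gn Fn.
  have : \int[mu]_(x in D) G^\+ x - \int[mu]_(x in D) G^\- x <=
         \int[mu]_(x in D) F x by rewrite -integralE.
  rewrite leeBlDr // => h; apply: le_lt_trans h _.
  apply: lte_add_pinfty; first by rewrite ltey_eq Ffin.
  exact: le_lt_trans Gn Fn.
have iH : mu.-integrable D (fun x => G x - F x) by exact: integrableB.
have mH : measurable_fun D (fun x => G x - F x) by exact: emeasurable_funB.
have H0 : {ae mu, forall x, D x -> 0 <= G x - F x /\ F x \is a fin_num}.
  move: FG (integrable_ae mD iF); apply: filterS2 => x h1 h2 Dx.
  split; last exact: h2.
  have := h2 Dx; have := h1 Dx.
  by case: (F x) => [r| |] //; case: (G x) => [g| |] //= + _;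
    rewrite ?lee_fin ?subr_ge0 ?leey.
have HI : \int[mu]_(x in D) `|G x - F x| = 0.
  apply/eqP; rewrite eq_le; apply/andP; split; last first.
    by apply: integral_ge0 => x _.
  rewrite (ae_eq_integral (fun x => G x - F x)) //; last 2 first.
  - exact: measurableT_comp.
  - move: H0; apply: filterS => x h Dx; have [h1 _] := h Dx.
    by rewrite gee0_abs.
  rewrite integralB // leeBlDr // add0e.
  exact: GF.
move/(ae_eq_integral_abs mu mD mH): HI => HI.
move: HI H0; apply: filterS2 => x h1 h2 Dx.
have := h1 Dx; have [_] := h2 Dx.
case: (F x) => [r| |] //; case: (G x) => [g| |] //= _.
by move=> /eqP; rewrite -EFinB eqe subr_eq0 => /eqP ->.
Qed.

End gen1.

Section gen2.
Local Open Scope ereal_scope.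
Context d1 d2 (T1 : measurableType d1) (T2 : measurableType d2) (R : realType).
Variable mu1 : {measure set T1 -> \bar R}.
Variable mu2 : {sigma_finite_measure set T2 -> \bar R}.
Variable A1 : set T1.
Hypothesis mA1 : measurable A1.

Local Notation pm := (product_measure1 mu1 mu2).

Lemma ae_sec (Q : T1 * T2 -> Prop) :
  {ae pm, forall z, A1 z.1 -> Q z} ->
  {ae mu1, forall t, A1 t -> {ae mu2, forall w, Q (t, w)}}.
Proof.
move=> [N [mN N0 sN]].
have mphi := measurable_fun_xsection mu2 mN.
have : \int[mu1]_x `|(mu2 \o xsection N) x| = 0.
  rewrite -N0 /product_measure1; apply: eq_integral => x _.
  by rewrite gee0_abs.
move/(ae_eq_integral_abs mu1 measurableT mphi) => h.
move: h; apply: filterS => t h At.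
exists (xsection N t); split.
- exact: measurable_xsection.
- exact: h.
- move=> w /= nQ; rewrite /xsection /=; apply/mem_set; apply: sN => /= H.
  by apply: nQ; exact: H.
Qed.

Lemma inner_meas (f : T1 * T2 -> R) : measurable_fun setT f ->
  measurable_fun setT (fun t => \int[mu2]_w (f (t, w))%:E).
Proof.
move=> mf.
have mEf : measurable_fun setT (EFin \o f) by exact/measurable_EFinP.
rewrite (_ : (fun t => _) = (fun t => fubini_F mu2 ((EFin \o f)^\+) t -
    fubini_F mu2 ((EFin \o f)^\-) t)); last first.
  apply/funext => t; rewrite /fubini_F [LHS]integralE.
  by congr (_ - _); apply: eq_integral => y _; rewrite ?funeposE ?funenegE.
apply: emeasurable_funB; apply: measurable_fun_fubini_tonelli_F.
- exact: measurable_funepos.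
- by move=> x; exact: funepos_ge0.
- exact: measurable_funeneg.
- by move=> x; exact: funeneg_ge0.
Qed.

Lemma sec_meas (f : T1 * T2 -> R) t : measurable_fun setT f ->
  measurable_fun setT (fun w => (f (t, w))%:E).
Proof.
move=> mf; apply/(measurable_EFinP setT (fun w => f (t, w))).
exact: measurable_fun_pair2.
Qed.

Lemma J_le (f g : T1 * T2 -> R) : measurable_fun setT f -> measurable_fun setT g ->
  {ae pm, forall z, A1 z.1 -> (f z <= g z)%R} ->
  \int[mu1]_(t in A1) \int[mu2]_w (f (t, w))%:E <=
  \int[mu1]_(t in A1) \int[mu2]_w (g (t, w))%:E.
Proof.
move=> mf mg fg.
apply: ae_le_integral => //; try exact: measurable_funTS (inner_meas _ mf);
  try exact: measurable_funTS (inner_meas _ mg).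
move: (ae_sec (fun z => (f z <= g z)%R) fg); apply: filterS => t h At.
apply: ae_le_integral => //; try exact: sec_meas _ _ mf; try exact: sec_meas _ _ mg.
by move: (h At); apply: filterS => w h' _; rewrite lee_fin; exact: h'.
Qed.

Lemma ae_prod (f g : T1 * T2 -> R) : measurable_fun setT f -> measurable_fun setT g ->
  {ae mu1, forall t, A1 t -> {ae mu2, forall w, f (t, w) = g (t, w)}} ->
  {ae pm, forall z, A1 z.1 -> f z = g z}.
Proof.
move=> mf mg h.
have mEf : measurable_fun setT (EFin \o f) by exact/measurable_EFinP.
have mEg : measurable_fun setT (EFin \o g) by exact/measurable_EFinP.
pose B := (A1 `*` setT) `&` [set z | (f z)%:E != (g z)%:E].
have mB : measurable B.
  rewrite /B -[X in X `&` _]setIT -setIA; apply: measurableI.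
    exact: measurableX.
  exact: measurable_neqe.
exists B; split => //; last first.
  move=> z /= nz; split; last first.
    by apply/eqP => e; apply: nz => _; exact: EFin_inj e.
  by split => //; apply: contrapT => nA; apply: nz.
rewrite /product_measure1.
rewrite (ae_eq_integral (cst 0)) ?integral0 //; try exact: measurable_fun_xsection.
move: h; apply: filterS => t h _ /=.
have [At|nAt] := pselect (A1 t).
  have [N [mN N0 sN]] := h At.
  apply: (subset_measure0 _ mN) => //; first exact: measurable_xsection.
  move=> w; rewrite /xsection /= => /set_mem [_ /= /eqP ne]; apply: sN => /=.
  by move=> e; apply: ne; rewrite e.
rewrite (_ : xsection B t = set0) ?measure0 //.
apply/seteqP; split => w //; rewrite /xsection /= => /set_mem [[]].
by move=> /= /nAt.
Qed.

Lemma J_eq (f g : T1 * T2 -> R) : measurable_fun setT f -> measurable_fun setT g ->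
  {ae pm, forall z, A1 z.1 -> (f z <= g z)%R} ->
  \int[mu1]_(t in A1) \int[mu2]_w (`|f (t, w)|)%:E < +oo ->
  \int[mu1]_(t in A1) \int[mu2]_w (g (t, w))%:E <=
  \int[mu1]_(t in A1) \int[mu2]_w (f (t, w))%:E ->
  {ae pm, forall z, A1 z.1 -> f z = g z}.
Proof.
move=> mf mg fg fint GF.
have maf : measurable_fun setT (fun z => `|f z|)%R.
  exact: measurableT_comp (@normr_measurable R setT) mf.
have mF := inner_meas _ mf; have mG := inner_meas _ mg; have mFA := inner_meas _ maf.
have iFA : mu1.-integrable A1 (fun t => \int[mu2]_w (`|f (t, w)|)%:E).
  apply/integrableP; split; first exact: measurable_funTS.
  apply: le_lt_trans fint; apply: ge0_le_integral => //.
  - exact: measurableT_comp (@abse_measurable R setT) (measurable_funTS mFA).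
  - exact: measurable_funTS.
  - move=> t _; rewrite gee0_abs //; exact: integral_ge0.
have iF : mu1.-integrable A1 (fun t => \int[mu2]_w (f (t, w))%:E).
  apply/integrableP; split; first exact: measurable_funTS.
  apply: le_lt_trans fint; apply: ge0_le_integral => //.
  - exact: measurableT_comp (@abse_measurable R setT) (measurable_funTS mF).
  - exact: measurable_funTS.
  - move=> t _; apply: le_trans (le_abse_integral mu2 measurableT (sec_meas _ t mf)) _.
    by apply: nm_le_integral => w _; rewrite abse_EFin.
have FG : {ae mu1, forall t, A1 t ->
    \int[mu2]_w (f (t, w))%:E <= \int[mu2]_w (g (t, w))%:E}.
  move: (ae_sec (fun z => (f z <= g z)%R) fg); apply: filterS => t h At.
  apply: ae_le_integral => //; try exact: sec_meas _ _ mf; try exact: sec_meas _ _ mg.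
  by move: (h At); apply: filterS => w h' _; rewrite lee_fin; exact: h'.
have FeqG := ae_eq_of_le _ _ _ mu1 _ mA1 _ _ (measurable_funTS mF) (measurable_funTS mG) iF FG GF.
have Ffin := integrable_ae mA1 iFA.
apply: ae_prod => //.
have E12 : {ae mu1, forall t, A1 t -> {ae mu2, forall w, (f (t, w) <= g (t, w))%R}
    /\ \int[mu2]_w (f (t, w))%:E = \int[mu2]_w (g (t, w))%:E}.
  by move: (ae_sec (fun z => (f z <= g z)%R) fg) FeqG; apply: filterS2 => t h1 h2 At;
    split; [exact: h1|exact: h2].
move: E12 Ffin; apply: filterS2 => t h12 h3 At.
have [h1 h2] := h12 At.
have : {ae mu2, forall w, setT w -> (f (t, w))%:E = (g (t, w))%:E}.
  apply: ae_eq_of_le => //; try exact: sec_meas _ _ mf; try exact: sec_meas _ _ mg.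
  - apply/integrableP; split; first exact: sec_meas.
    under eq_integral do rewrite abse_EFin.
    by rewrite ltey_eq h3.
  - by move: h1; apply: filterS => w h' _; rewrite lee_fin; exact: h'.
  - by rewrite h2.
by apply: filterS => w h' ; apply: EFin_inj; exact: h'.
Qed.

End gen2.

Lemma mpatch d1 d2 (T1 : measurableType d1) (T2 : measurableType d2) (D : set T1)
  (f : T1 -> T2) (c : T2) : measurable D -> measurable_fun D f ->
  measurable_fun setT (fun x => if x \in D then f x else c).
Proof.
move=> mD mf _ B mB; rewrite setTI.
have mfB : measurable (D `&` f @^-1` B) by exact: mf.
have [Bc|Bc] := pselect (B c).
  rewrite (_ : _ @^-1` B = (D `&` f @^-1` B) `|` ~` D).
    by apply: measurableU => //; exact: measurableC.
  apply/seteqP; split => x /=; case: ifPn => [/set_mem xD|/negP xD].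
  - by move=> fB; left.
  - by move=> _; right => /mem_set.
  - by case=> [[]//|].
  - by move=> _.
rewrite (_ : _ @^-1` B = (D `&` f @^-1` B)) //.
apply/seteqP; split => x /=; case: ifPn => [/set_mem xD|/negP xD].
- by move=> fB.
- by [].
- by case.
- by case=> /mem_set.
Qed.

Theorem lemma3p1 (R : realType) (d m : nat) (T : R) (hT : 0 < T)
  (dO : measure_display) (Omega : measurableType dO) (P : probability Omega R)
  (U : set 'rV[R]_m)
  (H : R -> 'rV[R]_d -> 'rV[R]_m -> 'rV[R]_d -> 'M[R]_d -> R)
  (X : R -> Omega -> 'rV[R]_d)
  (v : R -> 'rV[R]_d -> R) :
  (* standing measurability: H Borel, X a jointly measurable process *)
  @measurable_fun _ _ (R * Rvec R d * Rvec R m * Rvec R d * Rmat R d)%type R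
    setT (fun z => H z.1.1.1.1 z.1.1.1.2 z.1.1.2 z.1.2 z.2) ->
  @measurable_fun _ _ (R * Omega)%type (Rvec R d)
    (`[0, T] `*` setT) (fun z => X z.1 z.2) ->
  (* v Borel measurable, with Borel measurable x-gradient and x-Hessian *)
  @measurable_fun _ _ (R * Rvec R d)%type R
    (`[0, T] `*` setT) (fun z => v z.1 z.2) ->
  @measurable_fun _ _ (R * Rvec R d)%type (Rvec R d)
    (`[0, T] `*` setT) (fun z => gradx v z.1 z.2) ->
  @measurable_fun _ _ (R * Rvec R d)%type (Rmat R d)
    (`[0, T] `*` setT) (fun z => hessx v z.1 z.2) ->
  (* integrability of the infimum *)
  (\int[lebesgue_measure]_(t in `[0%R, T]%classic) \int[P]_w `|Hinf U H X v t w| < +oo)%E ->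
  (* existence of an optimal feedback control under v *)
  (exists u, @Uad R d m T U u /\
     {ae product_measure1 lebesgue_measure P, forall z : R * Omega,
        0 <= z.1 <= T -> (Hproc H X v u z.1 z.2)%:E = Hinf U H X v z.1 z.2}) ->
  (* the minimization problem has a solution ... *)
  (exists u, @Uad R d m T U u /\
     Jcost P T H X v u = ereal_inf [set Jcost P T H X v ub | ub in @Uad R d m T U])
  /\
  (* ... and every solution satisfies the pointwise optimality ( * ) *)
  (forall u, @Uad R d m T U u ->
     Jcost P T H X v u = ereal_inf [set Jcost P T H X v ub | ub in @Uad R d m T U] ->
     {ae product_measure1 lebesgue_measure P, forall z : R * Omega,
        0 <= z.1 <= T -> (Hproc H X v u z.1 z.2)%:E = Hinf U H X v z.1 z.2}).
Proof.
move=> mH mX mv mgr mhe hint [us [Uus hus]].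
pose A1 : set R := `[0, T]%classic.
have mA1 : measurable A1 by exact: measurable_itv.
have mDD : measurable (A1 `*` [set: Omega]) by exact: measurableX.
have mDD' : measurable (A1 `*` [set: Rvec R d]) by exact: measurableX.
pose Xp (z : R * Omega) : Rvec R d :=
  if z \in A1 `*` [set: Omega] then X z.1 z.2 else 0.
have mXp : measurable_fun setT Xp by apply: mpatch.
pose up (u : R -> 'rV[R]_d -> 'rV[R]_m) (y : R * Rvec R d) : Rvec R m :=
  if y \in A1 `*` [set: Rvec R d] then u y.1 y.2 else 0.
pose gp (y : R * Rvec R d) : Rvec R d :=
  if y \in A1 `*` [set: Rvec R d] then gradx v y.1 y.2 else 0.
pose hp (y : R * Rvec R d) : Rmat R d :=
  if y \in A1 `*` [set: Rvec R d] then hessx v y.1 y.2 else 0.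
pose Y (z : R * Omega) : R * Rvec R d := (z.1, Xp z).
pose gen u (z : R * Omega) : R := H z.1 (Xp z) (up u (Y z)) (gp (Y z)) (hp (Y z)).
have mY : measurable_fun setT Y by exact: measurable_fun_pair.
have mgen u : Uad T U u -> measurable_fun setT (gen u).
  move=> [mu _].
  have mup : measurable_fun setT (up u) by apply: mpatch.
  have mgp : measurable_fun setT gp by apply: mpatch.
  have mhp : measurable_fun setT hp by apply: mpatch.
  pose Phi (z : R * Omega) : (R * Rvec R d * Rvec R m * Rvec R d * Rmat R d)%type :=
    ((((z.1, Xp z), up u (Y z)), gp (Y z)), hp (Y z)).
  have mPhi : measurable_fun setT Phi.
    apply: measurable_fun_pair; last exact: measurableT_comp mhp mY.
    apply: measurable_fun_pair; last exact: measurableT_comp mgp mY.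
    apply: measurable_fun_pair; last exact: measurableT_comp mup mY.
    exact: measurable_fun_pair.
  exact: measurableT_comp mH mPhi.
have inA1 t : A1 t <-> 0 <= t <= T.
  by rewrite /A1 /= in_itv /=.
have genE u t w : 0 <= t <= T -> gen u (t, w) = Hproc H X v u t w.
  move=> tT.
  have h1 : (t, w) \in A1 `*` [set: Omega] by apply/mem_set; split => //; exact/inA1.
  have h2 : (t, X t w) \in A1 `*` [set: Rvec R d].
    by apply/mem_set; split => //; exact/inA1.
  by rewrite /gen /Y /up /gp /hp /Xp /= h1 /= h2.
have JE u : Jcost P T H X v u =
    (\int[lebesgue_measure]_(t in A1) \int[P]_w (gen u (t, w))%:E)%E.
  rewrite /Jcost; apply: eq_integral => t /set_mem /inA1 tT.
  by apply: eq_integral => w _; rewrite genE.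
have Hle u : Uad T U u -> forall t w, 0 <= t <= T ->
    (Hinf U H X v t w <= (Hproc H X v u t w)%:E)%E.
  move=> [_ uU] t w tT; apply: ge_ereal_inf.
  exists (Hproc H X v u t w)%:E => //.
  by exists (u t (X t w)) => //; exact: uU.
have PF : Filter (almost_everywhere (product_measure1 (@lebesgue_measure R) P)).
  exact: (ae_filter_ringOfSetsType
    (product_measure1 (@lebesgue_measure R) P : {measure set _ -> \bar R})).
have ae_le u : Uad T U u -> {ae product_measure1 lebesgue_measure P,
    forall z, A1 z.1 -> gen us z <= gen u z}.
  move=> Uu; move: hus; apply: filterS => -[t w] h /= /inA1 tT.
  by rewrite -lee_fin !genE // (h tT); exact: Hle.
have Jle u : Uad T U u -> (Jcost P T H X v us <= Jcost P T H X v u)%E.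
  move=> Uu; rewrite !JE; apply: J_le => //; [exact: mgen|exact: mgen|exact: ae_le].
split.
  exists us; split => //; apply/le_anti/andP; split.
    by apply/ereal_infP => _ [u Uu <-]; exact: Jle.
  by apply: ge_ereal_inf; exists (Jcost P T H X v us) => //; exists us.
move=> u Uu Jinf.
have Jus : (Jcost P T H X v u <= Jcost P T H X v us)%E.
  by rewrite Jinf; apply: ge_ereal_inf; exists (Jcost P T H X v us) => //; exists us.
have hus' : {ae product_measure1 lebesgue_measure P,
    forall z, A1 z.1 -> (gen us z)%:E = Hinf U H X v z.1 z.2}.
  by move: hus; apply: filterS => -[t w] h /= /inA1 tT; rewrite genE // h.
have mgus := mgen _ Uus.
have fint : (\int[lebesgue_measure]_(t in A1)
    \int[P]_w (`|gen us (t, w)|)%:E < +oo)%E.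
  apply: le_lt_trans hint.
  apply: ae_nm_le_integral => //.
  - apply: measurable_funTS.
    apply: (inner_meas _ _ _ _ _ P (fun z => `|gen us z|)).
    exact: measurableT_comp (@normr_measurable R setT) mgus.
  - by move=> t _; exact: integral_ge0.
  - by move=> t _; apply: integral_ge0 => w _; exact: abse_ge0.
  - move: (ae_sec _ _ _ _ _ lebesgue_measure P A1
      (fun z => (gen us z)%:E = Hinf U H X v z.1 z.2) hus').
    apply: filterS => t h At.
    apply: ae_nm_le_integral => //.
    + apply/(measurable_EFinP setT (fun w => `|gen us (t, w)|)).
      exact: (measurable_fun_pair2 (f := fun z => `|gen us z|) t
        (measurableT_comp (@normr_measurable R setT) mgus)).
    + by move: (h At); apply: filterS => w e _; rewrite -abse_EFin e.
have := J_eq _ _ _ _ _ lebesgue_measure P A1 mA1 (gen us) (gen u) mgus (mgen _ Uu)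
  (ae_le _ Uu) fint.
rewrite -!JE => /(_ Jus) h.
move: hus h; apply: filterS2 => -[t w] h1 h2 /= tT.
have At : A1 t by exact/inA1.
by rewrite -(genE u t w tT) -(h2 At) genE // h1.
Qed.
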